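(* Let $R$ be a finite local Frobenius ring which is not a field, of odd characteristic, in which $3$ is a unit, and fix a primitive additive character $\psi$ of $R$. Then for every non-primitive multiplicative character $\tau$ of $R$, $$\sum_{a\in R^\times}K_\tau(a)^3=0.$$
   Context: All rings are finite and commutative with identity; $R^\times$ is the unit group; $M$ is the maximal ideal of the local ring $R$. An additive character $(R,+)\to\mathbb{C}^*$ is primitive if the only ideal on which it is identically $1$ is $(0)$; $R$ is Frobenius if such a character exists. A multiplicative character is a homomorphism $R^\times\to\mathbb{C}^*$; its conductor is $R$ if it is trivial, and otherwise the largest ideal $I\subseteq M$ such that it is identically $1$ on $1+I$; it is primitive if its conductor is $(0)$. $K_\tau(a)=\sum_{u\in R^\times}\tau(u)\psi(u+au^{-1})$. Odd characteristic means $R/M$ has odd characteristic. *)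

(* Defs.v *)
From HB Require Import structures.
From mathcomp Require Import all_boot all_order all_algebra all_fingroup.
From mathcomp Require Import algC.
Set Implicit Arguments. Unset Strict Implicit. Unset Printing Implicit Defensive.
Import Order.TTheory GRing.Theory Num.Theory.
Local Open Scope ring_scope.

Section Defs.
Variable R : finComUnitRingType.

Definition is_ideal (I : {set R}) : Prop :=
  [/\ (0 : R) \in I,
      (forall x y, x \in I -> y \in I -> x - y \in I) &
      (forall r x, x \in I -> r * x \in I)].

Definition maximal_ideal (I : {set R}) : Prop :=
  [/\ is_ideal I, (1 : R) \notin I &
      forall J : {set R}, is_ideal J -> I \subset J -> J = I \/ (1 : R) \in J].

Definition local_with_max (M : {set R}) : Prop :=
  forall I : {set R}, maximal_ideal I <-> I = M.

(* p is the characteristic of the residue field R/M. *)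
Definition residue_char (M : {set R}) (p : nat) : Prop :=
  prime p /\ (p%:R : R) \in M.

Definition additive_char (psi : R -> algC) : Prop :=
  (forall x, psi x != 0) /\ (forall x y, psi (x + y) = psi x * psi y).

Definition primitive_additive_char (psi : R -> algC) : Prop :=
  additive_char psi /\
  forall I : {set R}, is_ideal I -> (forall x, x \in I -> psi x = 1) -> I = [set 0].

Definition mult_char (tau : {unit R} -> algC) : Prop :=
  (forall u, tau u != 0) /\ (forall u v, tau (u * v)%g = tau u * tau v).

Definition trivial_on_1plus (tau : {unit R} -> algC) (I : {set R}) : Prop :=
  forall u : {unit R}, val u - 1 \in I -> tau u = 1.

Definition is_conductor (M : {set R}) (tau : {unit R} -> algC) (I : {set R}) : Prop :=
  ((forall u, tau u = 1) -> I = [set: R]) /\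
  (~ (forall u, tau u = 1) -> [/\ is_ideal I, I \subset M, trivial_on_1plus tau I &
         forall J : {set R}, is_ideal J -> J \subset M -> trivial_on_1plus tau J ->
           J \subset I]).

Definition primitive_mult_char (M : {set R}) (tau : {unit R} -> algC) : Prop :=
  is_conductor M tau [set 0].

Definition Kloosterman (psi : R -> algC) (tau : {unit R} -> algC) (a : R) : algC :=
  \sum_(u : {unit R}) tau u * psi (val u + a * (val u)^-1).

End Defs.

(* Main.v *)
Require Import Defs.
From HB Require Import structures.
From mathcomp Require Import all_boot all_order all_algebra all_fingroup.
From mathcomp Require Import algC.
From mathcomp Require Import ring.
From Stdlib Require Import Classical.
Set Implicit Arguments. Unset Strict Implicit. Unset Printing Implicit Defensive.
Import GRing.Theory Num.Theory.
Local Open Scope ring_scope.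

Definition idealb (R : finComUnitRingType) (I : {set R}) : bool :=
  [&& (0 : R) \in I, [forall x, forall y, (x \in I) ==> (y \in I) ==> (x - y \in I)]
    & [forall r, forall x, (x \in I) ==> (r * x \in I)]].

Lemma idealbP (R : finComUnitRingType) (I : {set R}) : reflect (is_ideal I) (idealb I).
Proof.
apply: (iffP idP).
  case/and3P=> H0 /forallP H1 /forallP H2; split=> // x y.
    by move: (H1 x) => /forallP/(_ y)/implyP H /H /implyP; apply.
  by move: (H2 x) => /forallP/(_ y)/implyP.
case=> H0 H1 H2; apply/and3P; split=> //.
  by apply/forallP=> x; apply/forallP=> y; apply/implyP=> hx; apply/implyP=> hy; apply: H1.
by apply/forallP=> x; apply/forallP=> y; apply/implyP=> hy; apply: H2.
Qed.

Lemma maxM (R : finComUnitRingType) (M : {set R}) : local_with_max M -> maximal_ideal M.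
Proof. by move=> H; apply: (proj2 (H M)). Qed.

Lemma M_nunit (R : finComUnitRingType) (M : {set R}) : local_with_max M ->
  forall y, y \in M -> y \isn't a GRing.unit.
Proof.
move=> /maxM [[H0 H1 H2] H1M _] y yM; apply/negP=> yU.
by move: (H2 y^-1 y yM); rewrite mulVr // (negbTE H1M).
Qed.

Lemma nunit_M (R : finComUnitRingType) (M : {set R}) : local_with_max M ->
  forall y, y \isn't a GRing.unit -> y \in M.
Proof.
move=> HM y yN.
pose I0 := [set r * y | r : R].
have I0i : idealb I0.
  apply/idealbP; split.
  - by apply/imsetP; exists 0; rewrite ?mul0r.
  - move=> a b /imsetP[r _ ->] /imsetP[s _ ->]; apply/imsetP; exists (r - s) => //.
    by rewrite mulrBl.
  - move=> t a /imsetP[r _ ->]; apply/imsetP; exists (t * r) => //; by rewrite mulrA.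
have I01 : (1 : R) \notin I0.
  apply/negP=> /imsetP[r _ e]; move/negP: yN; apply; apply/unitrPr; exists r.
  by rewrite mulrC e.
pose P (J : {set R}) := [&& idealb J, (1 : R) \notin J & I0 \subset J].
have PI0 : P I0 by rewrite /P I0i I01 subxx.
case: (@arg_maxnP _ I0 P (fun J : {set R} => #|J|) PI0) => J /and3P [Ji J1 IJ] Jmax.
have JM : maximal_ideal J.
  split=> //; first exact/idealbP.
  move=> K Ki JK; case K1: ((1 : R) \in K); [by right | left].
  have PK : P K by apply/and3P; split; [exact/idealbP | by rewrite K1 | exact: subset_trans IJ JK].
  apply/eqP; rewrite eq_sym eqEcard JK /=; exact: Jmax.
move/(HM J): JM => <-; apply: (subsetP IJ); apply/imsetP; exists 1 => //; by rewrite mul1r.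
Qed.

Lemma unitDM (R : finComUnitRingType) (M : {set R}) : local_with_max M ->
  forall a m, a \is a GRing.unit -> m \in M -> a + m \is a GRing.unit.
Proof.
move=> HM a m aU mM; apply: contraT => /(nunit_M HM) H.
have [[H0 H1 H2] _ _] := maxM HM.
have : a \in M by have := H1 _ _ H mM; rewrite addrK.
by move/(M_nunit HM); rewrite aU.
Qed.

Lemma M_prime (R : finComUnitRingType) (M : {set R}) : local_with_max M ->
  forall a b, a * b \in M -> a \in M \/ b \in M.
Proof.
move=> HM a b abM; apply: NNPP => H.
have aU : a \is a GRing.unit by apply: contraT => /(nunit_M HM) h; exfalso; exact: H (or_introl h).
have bU : b \is a GRing.unit by apply: contraT => /(nunit_M HM) h; exfalso; exact: H (or_intror h).
by move: (M_nunit HM abM); rewrite unitrM aU bU.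
Qed.

Lemma addM (R : finComUnitRingType) (M : {set R}) : local_with_max M ->
  forall a b, a \in M -> b \in M -> a + b \in M.
Proof.
move=> HM a b aM bM; have [[H0 H1 H2] _ _] := maxM HM.
have nb : - b \in M by rewrite -sub0r; apply: H1.
by rewrite -(opprK b); apply: H1.
Qed.

Lemma mulM (R : finComUnitRingType) (M : {set R}) : local_with_max M ->
  forall a r, a \in M -> a * r \in M.
Proof. move=> HM a r aM; have [[H0 H1 H2] _ _] := maxM HM; rewrite mulrC; exact: H2. Qed.

Lemma oppM (R : finComUnitRingType) (M : {set R}) : local_with_max M ->
  forall a, a \in M -> - a \in M.
Proof. move=> HM a aM; have [[H0 H1 H2] _ _] := maxM HM; rewrite -sub0r; exact: H1. Qed.

Lemma ann_M (R : finComUnitRingType) (M : {set R}) : local_with_max M ->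
  forall x y : R, x != 0 -> x * y = 0 -> y \in M.
Proof.
move=> HM x y xn0 xy; apply: (nunit_M HM); apply/negP => yU.
by move/eqP: xn0; apply; rewrite -(mulrK yU x) xy mul0r.
Qed.

Lemma nilM (R : finComUnitRingType) (M : {set R}) : local_with_max M ->
  forall y, y \in M -> exists n, y ^+ n = 0.
Proof.
move=> HM y yM.
have powM : forall k, y ^+ k.+1 \in M by move=> k; rewrite exprSr mulrC; exact: mulM.
have key : forall i j : nat, (i < j)%N -> y ^+ i = y ^+ j -> exists n, y ^+ n = 0.
  move=> i j lij e; exists i.
  have uU : 1 - y ^+ (j - i) \is a GRing.unit.
    apply: (unitDM HM); first exact: unitr1.
    apply: (oppM HM); case: j lij e => [//|j] lij e; rewrite subSn //; exact: powM.
  have h : y ^+ i * (1 - y ^+ (j - i)) = 0.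
    by rewrite mulrBr mulr1 -exprD subnKC ?(ltnW lij) // -e subrr.
  by rewrite -(mulrK uU (y ^+ i)) h mul0r.
pose f (i : 'I_(#|R|.+1)) := y ^+ i.
have : ~~ injectiveb f.
  apply/negP => /injectiveP finj; have := leq_card f finj; by rewrite card_ord ltnn.
case/injectivePn => i [j] ij fij.
case: (ltngtP i j) => [lij|lji|eij].
- exact: key lij fij.
- exact: key lji (esym fij).
- by move: ij; rewrite -val_eqE /= eij eqxx.
Qed.

Lemma psi0 (R : finComUnitRingType) (psi : R -> algC) : additive_char psi -> psi 0 = 1.
Proof.
case=> Hn HD; have := HD 0 0; rewrite addr0 => e.
by apply: (mulfI (Hn 0)); rewrite mulr1 -e.
Qed.

Lemma psi_triv (R : finComUnitRingType) (psi : R -> algC) : primitive_additive_char psi ->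
  forall c, (forall r, psi (r * c) = 1) -> c = 0.
Proof.
case=> Ha Hp c Hc.
have Ii : is_ideal [set r * c | r : R].
  split.
  - by apply/imsetP; exists 0; rewrite ?mul0r.
  - move=> a b /imsetP[r _ ->] /imsetP[s _ ->]; apply/imsetP; exists (r - s) => //.
    by rewrite mulrBl.
  - move=> t a /imsetP[r _ ->]; apply/imsetP; exists (t * r) => //; by rewrite mulrA.
have E : [set r * c | r : R] = [set 0] by apply: Hp Ii _ => z /imsetP[r _ ->].
have : c \in [set r * c | r : R] by apply/imsetP; exists 1; rewrite ?mul1r.
by rewrite E inE => /eqP.
Qed.

Lemma sum_psi (R : finComUnitRingType) (psi : R -> algC) : primitive_additive_char psi ->
  forall c, \sum_(r : R) psi (r * c) = if c == 0 then #|R|%:R else 0.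
Proof.
move=> Hp c; have [[Hn HD] _] := Hp; case: eqP => [->|cn0].
  under eq_bigr do rewrite mulr0 (psi0 Hp.1).
  by rewrite sumr_const.
have [r0 Hr0] : exists r0, psi (r0 * c) != 1.
  apply: NNPP => H; apply: cn0; apply: (psi_triv Hp) => r; apply: NNPP => H2.
  by apply: H; exists r; apply/eqP.
set S := \sum_(r : R) _.
have e : S = S * psi (r0 * c).
  rewrite {1}/S (reindex_inj (addrI r0)) /= mulr_suml; apply: eq_bigr => r _.
  by rewrite mulrDl HD mulrC.
have : S * (1 - psi (r0 * c)) = 0 by rewrite mulrBr mulr1 -e subrr.
by move/eqP; rewrite mulf_eq0 subr_eq0 (eq_sym 1) (negbTE Hr0) orbF => /eqP.
Qed.

Lemma step1 (R : finComUnitRingType) (psi : R -> algC) (tau : {unit R} -> algC) (x : R) :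
  primitive_additive_char psi -> mult_char tau -> x * x = 0 ->
  (forall (c : {unit R}) r, val c = 1 + x * r -> tau c = 1) ->
  forall a, Kloosterman psi tau a = \sum_(u : {unit R})
     (if x * (val u - a * (val u)^-1) == 0 then tau u * psi (val u + a * (val u)^-1) else 0).
Proof.
move=> Hp [Htn HtM] Hx2 Htr a.
have [[Hpn HpD] _] := Hp.
have E : forall r, Kloosterman psi tau a = \sum_(u : {unit R})
   tau u * psi (val u + a * (val u)^-1) * psi (r * (x * (val u - a * (val u)^-1))).
  move=> r.
  have cU : 1 + x * r \is a GRing.unit.
    apply/unitrPr; exists (1 - x * r).
    transitivity (1 - (x * x) * (r * r)); first by ring.
    by rewrite Hx2 mul0r subr0.
  pose c : {unit R} := Sub (1 + x * r) cU.
  have vc : val c = 1 + x * r by rewrite SubK.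
  have ic : (1 + x * r)^-1 = 1 - x * r.
    apply: (mulrI cU); rewrite mulrV //.
    transitivity (1 - (x * x) * (r * r)); first by rewrite Hx2 mul0r subr0.
    by ring.
  rewrite /Kloosterman (reindex_inj (mulIg c)) /=.
  apply: eq_bigr => u _.
  have uU : val u \is a GRing.unit by exact: valP.
  have cU' : val c \is a GRing.unit by exact: valP.
  rewrite HtM (Htr c r vc) mulr1 invrM // ic -mulrA -HpD.
  congr (_ * psi _); ring.
have cardn0 : (#|R|%:R : algC) != 0.
  by rewrite pnatr_eq0 -lt0n; apply/card_gt0P; exists 0.
apply: (mulfI cardn0).
transitivity (\sum_(r : R) Kloosterman psi tau a); first by rewrite sumr_const mulr_natl.
under eq_bigr => r _ do rewrite (E r).
rewrite exchange_big mulr_sumr; apply: eq_bigr => u _.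
rewrite -mulr_sumr sum_psi //.
by case: eqP => _; rewrite ?mulr0 // mulrC.
Qed.

Lemma s_unit (R : finComUnitRingType) (M : {set R}) (x u v w a : R) :
  local_with_max M -> (3%:R : R) \is a GRing.unit -> x != 0 ->
  u \is a GRing.unit -> v \is a GRing.unit -> w \is a GRing.unit ->
  x * (u - a * u^-1) = 0 -> x * (v - a * v^-1) = 0 -> x * (w - a * w^-1) = 0 ->
  u^-1 + v^-1 + w^-1 \is a GRing.unit.
Proof.
move=> HM H3 xn0 uU vU wU cu cv cw.
have sq : forall z, z \is a GRing.unit -> x * (z - a * z^-1) = 0 -> x * (z * z - a) = 0.
  move=> z zU cz; have -> : z * z - a = (z - a * z^-1) * z.
    by rewrite mulrBl -mulrA mulVr // mulr1.
  by rewrite mulrA cz mul0r.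
have pm : forall z, z \is a GRing.unit -> x * (z - a * z^-1) = 0 ->
    u * z^-1 - 1 \in M \/ u * z^-1 + 1 \in M.
  move=> z zU cz.
  have : x * ((u - z) * (u + z)) = 0.
    have -> : (u - z) * (u + z) = (u * u - a) - (z * z - a) by ring.
    by rewrite mulrBr (sq u uU cu) (sq z zU cz) subrr.
  move/(ann_M HM xn0)/(M_prime HM) => [h|h]; [left|right].
  - have -> : u * z^-1 - 1 = (u - z) * z^-1 by rewrite mulrBl mulrV.
    exact: mulM.
  - have -> : u * z^-1 + 1 = (u + z) * z^-1 by rewrite mulrDl mulrV.
    exact: mulM.
suff : u * (u^-1 + v^-1 + w^-1) \is a GRing.unit by rewrite unitrM => /andP[].
rewrite !mulrDr mulrV //.
set p := u * v^-1; set q := u * w^-1.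
have [hv|hv] := pm v vU cv; have [hw|hw] := pm w wU cw.
- have -> : 1 + p + q = 3%:R + ((p - 1) + (q - 1)) by ring.
  by apply: (unitDM HM) => //; apply: (addM HM).
- have -> : 1 + p + q = 1 + ((p - 1) + (q + 1)) by ring.
  by apply: (unitDM HM); [exact: unitr1 | apply: (addM HM)].
- have -> : 1 + p + q = 1 + ((p + 1) + (q - 1)) by ring.
  by apply: (unitDM HM); [exact: unitr1 | apply: (addM HM)].
- have -> : 1 + p + q = -1 + ((p + 1) + (q + 1)) by ring.
  by apply: (unitDM HM); [exact: unitrN1 | apply: (addM HM)].
Qed.

Definition gK (R : finComUnitRingType) (psi : R -> algC) (tau : {unit R} -> algC) (x a : R)
  (u : {unit R}) : algC :=
  if x * (val u - a * (val u)^-1) == 0 then tau u * psi (val u + a * (val u)^-1) else 0.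

Lemma step2 (R : finComUnitRingType) (M : {set R}) (psi : R -> algC)
  (tau : {unit R} -> algC) (x : R) :
  local_with_max M -> (3%:R : R) \is a GRing.unit -> primitive_additive_char psi ->
  x != 0 -> x * x = 0 -> forall u v w : {unit R},
  \sum_(a : {unit R}) gK psi tau x (val a) u * (gK psi tau x (val a) v * gK psi tau x (val a) w) = 0.
Proof.
move=> HM H3 Hp xn0 Hx2 u v w.
have [[Hpn HpD] _] := Hp.
set I := \sum_(a : {unit R}) _.
set s := (val u)^-1 + (val v)^-1 + (val w)^-1.
have xM : x \in M by apply: (ann_M HM xn0 Hx2).
have xrM : forall r, x * r \in M by move=> r; exact: mulM.
have shU : forall (a : {unit R}) r, val a + x * r \is a GRing.unit.
  by move=> a r; apply: (unitDM HM); [exact: valP | exact: xrM].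
have E : forall r, I = I * psi (r * (x * s)).
  move=> r.
  pose sh (a : {unit R}) : {unit R} := Sub (val a + x * r) (shU a r).
  have sh_inj : injective sh.
    by move=> a b /(congr1 val); rewrite !SubK => /addIr /val_inj.
  rewrite {1}/I (reindex_inj sh_inj) /= mulr_suml; apply: eq_bigr => a _.
  have gsh : forall z : {unit R}, gK psi tau x (val (sh a)) z
      = gK psi tau x (val a) z * psi (r * (x * (val z)^-1)).
    move=> z; rewrite /gK SubK.
    have -> : x * (val z - (val a + x * r) * (val z)^-1) = x * (val z - val a * (val z)^-1).
      transitivity (x * (val z - val a * (val z)^-1) - (x * x) * (r * (val z)^-1)); first by ring.
      by rewrite Hx2 mul0r subr0.
    case: eqP => _; last by rewrite mul0r.
    rewrite -mulrA -HpD; congr (_ * psi _); ring.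
  rewrite !gsh /s !mulrDr !HpD; ring.
apply/eqP; apply: contraT => In0.
have Hall : forall r, psi (r * (x * s)) = 1.
  by move=> r; apply: (mulfI In0); rewrite mulr1 -E.
have xs0 := psi_triv Hp Hall.
have [a0 Ha0] : exists a0 : {unit R},
    gK psi tau x (val a0) u * (gK psi tau x (val a0) v * gK psi tau x (val a0) w) != 0.
  apply: NNPP => H; move/eqP: In0; apply; rewrite /I big1 // => a _.
  apply/eqP; apply: NNPP => H2; apply: H; exists a; exact/negP.
have cond : forall z, gK psi tau x (val a0) z != 0 -> x * (val z - val a0 * (val z)^-1) = 0.
  by move=> z; rewrite /gK; case: ifP => [/eqP e _|_]; rewrite ?eqxx.
move: Ha0; rewrite !mulf_eq0 !negb_or => /and3P [gu gv gw].
have sU : s \is a GRing.unit.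
  by apply: (s_unit HM H3 xn0 (valP u) (valP v) (valP w) (cond _ gu) (cond _ gv) (cond _ gw)).
exfalso; move/eqP: xn0; apply; by rewrite -(mulrK sU x) xs0 mul0r.
Qed.

Lemma tau1 (R : finComUnitRingType) (tau : {unit R} -> algC) : mult_char tau -> tau 1%g = 1.
Proof.
case=> Hn HM; have := HM 1%g 1%g; rewrite mulg1 => e.
by apply: (mulfI (Hn 1%g)); rewrite mulr1 -e.
Qed.

Unset Implicit Arguments.

Theorem mainTheorem4 (R : finComUnitRingType) (M : {set R})
  (psi : R -> algC) (tau : {unit R} -> algC) :
  local_with_max M ->
  ~ (forall x : R, x != 0 -> x \is a GRing.unit) ->
  (exists p, residue_char M p /\ odd p) ->
  (3%:R : R) \is a GRing.unit ->
  primitive_additive_char psi ->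
  mult_char tau ->
  ~ primitive_mult_char M tau ->
  \sum_(a : {unit R}) (Kloosterman psi tau (val a)) ^+ 3 = 0.
Proof.
move=> HM Hnf _ H3 Hp Ht Hnp.
have [MI M1 _] := maxM HM.
have [y0 y0n0 y0N] : exists2 y : R, y != 0 & y \isn't a GRing.unit.
  apply: NNPP => H; apply: Hnf => z zn0; apply: NNPP => zU; apply: H; exists z => //.
  exact/negP.
have [J0 [[J0i J0M J0t] [y yJ yn0]]] : exists J0 : {set R},
    [/\ is_ideal J0, J0 \subset M & trivial_on_1plus tau J0] /\ exists2 y, y \in J0 & y != 0.
  case: (classic (forall u, tau u = 1)) => Htriv.
    exists M; split; first by split; [exact: MI | exact: subxx | move=> u _; exact: Htriv].
    by exists y0 => //; apply: (nunit_M HM).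
  apply: NNPP => H; apply: Hnp; split => // _; split.
  - split; rewrite ?inE //.
      by move=> a b; rewrite !inE => /eqP -> /eqP ->; rewrite subr0.
    by move=> r a; rewrite !inE => /eqP ->; rewrite mulr0.
  - by apply/subsetP => z; rewrite inE => /eqP ->; case: MI.
  - move=> u; rewrite inE subr_eq0 => /eqP h.
    have -> : u = 1%g by apply: val_inj.
    exact: tau1.
  - move=> J Ji JM Jt; apply/subsetP => z zJ; rewrite inE; apply: NNPP => zn.
    apply: H; exists J; split => //; exists z => //; exact/negP.
have yM : y \in M by apply: (subsetP J0M).
have [n yn] := nilM HM yM.
have exn : exists n, y ^+ n == 0 by exists n; apply/eqP.
case: (ex_minnP exn) => m /eqP ym mmin.
case: m ym mmin => [|m] ym mmin.
  by move/eqP: ym; rewrite expr0 oner_eq0.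
case: m ym mmin => [|k] ym mmin.
  by move: yn0; rewrite -ym expr1 eqxx.
set x := y ^+ k.+1.
have xn0 : x != 0.
  apply/eqP => h; have := mmin k.+1; rewrite -/x h eqxx ltnn; by move/(_ isT).
have xx : x * x = 0.
  rewrite /x -exprD (_ : (k.+1 + k.+1 = k.+2 + k)%N); first by rewrite exprD ym mul0r.
  by rewrite !addSn addnS.
have xJ : x \in J0 by rewrite /x exprSr; case: J0i => _ _; apply.
have Htr : forall (c : {unit R}) r, val c = 1 + x * r -> tau c = 1.
  move=> c r vc; apply: J0t; rewrite vc (addrC 1) addrK mulrC.
  by case: J0i => _ _; apply.
under eq_bigr do rewrite (step1 Hp Ht xx Htr).
transitivity (\sum_(u : {unit R}) \sum_(v : {unit R}) \sum_(w : {unit R})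
   \sum_(a : {unit R}) gK psi tau x (val a) u * (gK psi tau x (val a) v * gK psi tau x (val a) w)).
  transitivity (\sum_(a : {unit R}) \sum_(u : {unit R}) \sum_(v : {unit R}) \sum_(w : {unit R})
     gK psi tau x (val a) u * (gK psi tau x (val a) v * gK psi tau x (val a) w)).
    apply: eq_bigr => a _.
    rewrite !exprS expr0 mulr1 mulr_suml; apply: eq_bigr => u _.
    rewrite mulr_suml mulr_sumr; apply: eq_bigr => v _.
    by rewrite mulr_sumr mulr_sumr.
  rewrite exchange_big; apply: eq_bigr => u _.
  rewrite exchange_big; apply: eq_bigr => v _.
  by rewrite exchange_big.
rewrite big1 // => u _; rewrite big1 // => v _; rewrite big1 // => w _.
have := @step2 R M psi tau x HM H3 Hp xn0 xx u v w. exact.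
Qed.
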